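(* Let $t\ge 2$ be an integer and let $G$ be a finite simple graph. Then \[ N(G,K_t)\;\le\;\sum_{e\in E(G)}\frac{\binom{p(e)+1}{t}}{\binom{p(e)+1}{2}}\;=\;\frac{1}{\binom{t}{2}}\sum_{e\in E(G)}\binom{p(e)-1}{t-2}. \] If $t=2$, equality always holds. If $t\ge 3$, equality holds if and only if every connected component of $G$ is either a complete graph or contains no path of length $t-1$.
   Context: $N(G,K_t)$ denotes the number of subgraphs of $G$ isomorphic to $K_t$. The length of a path is its number of edges. For an edge $e\in E(G)$, $p(e)$ denotes the length of a longest path in $G$ containing the edge $e$ (so $p(e)\ge 1$). Binomial coefficients $\binom{a}{b}$ with $0\le a<b$ are $0$. *)

(* Defs.v *)
From mathcomp Require Import all_boot all_order all_algebra.
Set Implicit Arguments. Unset Strict Implicit. Unset Printing Implicit Defensive.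

Section Graphs.
Variables (T : finType) (g : rel T).

Definition simple_graph : Prop := symmetric g /\ irreflexive g.

Definition edges : {set {set T}} :=
  [set [set x; y] | x in T, y in T & g x y].

(* A path is a sequence of pairwise distinct vertices, consecutive ones
   adjacent; its length is its number of edges (= number of vertices - 1). *)
Definition is_gpath (s : seq T) : bool :=
  match s with
  | [::] => false
  | x :: s' => path g x s' && uniq s
  end.

Definition path_has_edge (s : seq T) (E : {set T}) : bool :=
  has (fun pr => [set pr.1; pr.2] == E) (zip s (behead s)).

Definition has_path_with (k : nat) (E : {set T}) : bool :=
  [exists s : k.+1.-tuple T, is_gpath s && path_has_edge s E].

(* p(E): length of a longest path containing E (paths have length < #|T|). *)
Definition plong (E : {set T}) : nat :=
  \max_(k < #|T|) (if has_path_with k E then (k : nat) else 0%N).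

(* Cliques; N(G, K_t) = number of vertex sets of size t inducing a complete
   graph (a copy of K_t in G is determined by its vertex set). *)
Definition is_clique (S : {set T}) : bool :=
  [forall x in S, forall y in S, (x != y) ==> g x y].

Definition NK (t : nat) : nat :=
  #|[set S : {set T} | (#|S| == t) && is_clique S]|.

Definition component (x : T) : {set T} := [set y | connect g x y].

Definition has_path_in (C : {set T}) (k : nat) : bool :=
  [exists s : k.+1.-tuple T, is_gpath s && all (fun v => v \in C) s].

End Graphs.

(* Main.v *)
Require Import Defs.
From mathcomp Require Import all_boot all_order all_algebra zify.
Set Implicit Arguments. Unset Strict Implicit. Unset Printing Implicit Defensive.

Section Aux.
Variable T : finType.
Implicit Types (g : rel T) (s : seq T) (E A : {set T}).

Lemma gpath_cons g x s : is_gpath g (x :: s) = path g x s && uniq (x :: s).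
Proof. by []. Qed.

Lemma gpath_size g s : is_gpath g s -> (0 < size s) && (size s <= #|T|).
Proof.
case: s => // x s /andP[_ U]; apply/andP; split => //.
by rewrite -(card_uniqP U) max_card.
Qed.

Lemma plong_ge g s E : is_gpath g s -> path_has_edge s E -> (size s).-1 <= plong g E.
Proof.
move=> gs hs; have /andP[s0 sT] := gpath_size gs.
have kT : (size s).-1 < #|T| by rewrite prednK.
have Hs : size s == ((size s).-1).+1 by rewrite prednK.
have hp : has_path_with g (size s).-1 E by apply/existsP; exists (Tuple Hs); rewrite /= gs hs.
rewrite /plong; apply: leq_trans (leq_bigmax (Ordinal kT)); by rewrite /= hp.
Qed.

Lemma plong_le g E m :
  (forall s, is_gpath g s -> path_has_edge s E -> (size s).-1 <= m) -> plong g E <= m.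
Proof.
move=> H; apply/bigmax_leqP => k _; case: ifP => // /existsP[u /andP[gu hu]].
by have := H u gu hu; rewrite size_tuple.
Qed.

Lemma plong_mono g g' E : (forall x y, g' x y -> g x y) -> plong g' E <= plong g E.
Proof.
move=> sub; apply: plong_le => -[|x s] //= /andP[p u] h.
have := @plong_ge g (x :: s) E; rewrite /= u (sub_path sub p); exact.
Qed.

End Aux.

Section Aux.
Variable T : finType.
Implicit Types (g : rel T) (s : seq T) (E A : {set T}).

Definition pth g s := if s is x :: s' then path g x s' else true.

Lemma gpathE g s : is_gpath g s = (s != [::]) && pth g s && uniq s.
Proof. by case: s. Qed.

Lemma pth_cat g q y r :
  pth g (q ++ y :: r) = [&& pth g q, (q == [::]) || g (last y q) y & pth g (y :: r)].
Proof. by case: q => [|x q] //=; rewrite cat_path /= andbA. Qed.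

Lemma path_pth g x q : path g x q -> pth g q.
Proof. by case: q => //= y q /andP[]. Qed.

Lemma pth_rev g s : symmetric g -> pth g (rev s) = pth g s.
Proof.
move=> sg; case: s => // x s.
rewrite lastI rev_rcons /= -lastI rev_path.
by apply: eq_path => a b; rewrite sg.
Qed.

Lemma last_rev_cons (x y : T) s : last y (rev (x :: s)) = x.
Proof. by rewrite rev_cons last_rcons. Qed.

Lemma phe_cons s a E : path_has_edge s E -> path_has_edge (a :: s) E.
Proof. by case: s => //= y s; rewrite /path_has_edge /= => ->; rewrite orbT. Qed.

Lemma phe_cat s1 x y s2 : path_has_edge (s1 ++ x :: y :: s2) [set x; y].
Proof.
elim: s1 => [|a s1 IH] /=; first by rewrite /path_has_edge /= eqxx.
exact: phe_cons.
Qed.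

Lemma phe_mem s E : path_has_edge s E -> exists2 x, x \in s & x \in E.
Proof.
elim: s => // a s IH; case: s IH => // b s IH.
rewrite /path_has_edge /= => /orP[/eqP <-|h].
  by exists a; rewrite !inE eqxx.
by case: (IH h) => x xs xE; exists x => //; rewrite inE xs orbT.
Qed.

Lemma uniq_rev_cat (a b : seq T) : uniq (rev a ++ b) = uniq (a ++ b).
Proof. rewrite !cat_uniq rev_uniq (@eq_has _ (mem (rev a)) (mem a)) // => x. by rewrite /= mem_rev. Qed.

Lemma rotate_end g v s1 w s2 : symmetric g ->
  is_gpath g (v :: s1 ++ w :: s2) -> g v w ->
  is_gpath g (rev (v :: s1) ++ w :: s2) /\ path_has_edge (rev (v :: s1) ++ w :: s2) [set v; w].
Proof.
move=> sg; rewrite !gpathE /= => /andP[p u] vw; split; last first.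
  by rewrite rev_cons cat_rcons; apply: phe_cat.
have -> : (rev (v :: s1) ++ w :: s2 != [::]) by case: (rev _).
have -> : uniq (rev (v :: s1) ++ w :: s2) by rewrite uniq_rev_cat.
rewrite andbT /= pth_cat pth_rev //= last_rev_cons vw orbT.
by move: p; rewrite cat_path /= => /and3P[-> _ ->].
Qed.

Lemma path_pthE g z q : path g z q = pth g q && ((q == [::]) || g z (head z q)).
Proof. by case: q => //= y q; rewrite andbC. Qed.

Lemma head_rev (z : T) q : head z (rev q) = last z q.
Proof. by case/lastP: q => // q y; rewrite rev_rcons last_rcons. Qed.

Lemma chord_path g x r y : symmetric g -> cycle g (x :: r) -> uniq (x :: r) ->
  y \in r -> g x y ->
  exists q, [/\ is_gpath g q, size q = size (x :: r) & path_has_edge q [set x; y]].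
Proof.
move=> sg cy u yr xy; case/splitPr: yr cy u => A B.
rewrite /= rcons_path cat_path last_cat /= => /andP[/and3P[pA lAy pB] lBx] u.
exists (A ++ y :: x :: rev B); split.
- rewrite gpathE; have -> : (A ++ y :: x :: rev B != [::]) by case: (A).
  have -> /= : uniq (A ++ y :: x :: rev B).
    rewrite -(perm_uniq (s1 := x :: A ++ y :: B)) //.
    apply/permP => p; rewrite /= !count_cat /= count_rev; lia.
  rewrite andbT pth_cat (path_pth pA) /= (sg y x) xy /=.
  have -> : ((A == [::]) || g (last y A) y) by move: lAy; case: (A) => //= ? ? ->; rewrite orbT.
  have : pth g (rev (rcons (y :: B) x)) by rewrite pth_rev //= rcons_path pB lBx.
  by rewrite rev_rcons /= rev_cons rcons_path => /andP[].
- rewrite !size_cat /= size_rev; lia.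
- by rewrite setUC; apply: phe_cat.
Qed.

Lemma cycle_out g y r z : symmetric g -> cycle g (y :: r) -> uniq (y :: r) ->
  z \notin y :: r -> g y z -> is_gpath g (z :: y :: r).
Proof.
move=> sg cy u zn yz; rewrite gpathE.
have -> : uniq (z :: y :: r) by rewrite cons_uniq zn u.
rewrite /= (sg z y) yz /= andbT.
by move: cy; rewrite /= rcons_path => /andP[].
Qed.

Lemma cycle_rot g c x : cycle g c -> uniq c -> x \in c ->
  exists r, [/\ cycle g (x :: r), uniq (x :: r), size (x :: r) = size c & (x :: r) =i c].
Proof.
move=> cy u xc; case: (rot_to xc) => i r e; exists r.
by rewrite -e rot_cycle rot_uniq size_rot; split => // z; rewrite mem_rot.
Qed.

Lemma last_take (v : T) s i : i <= size s -> last v (take i s) = nth v (v :: s) i.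
Proof.
elim: s v i => [|y s IH] v [|i] //= hi.
by rewrite IH // (set_nth_default v).
Qed.

Lemma make_cycle g v s i : symmetric g -> is_gpath g (v :: s) -> i < size s ->
  g v (nth v (v :: s) i.+1) -> g (nth v (v :: s) i) (last v s) ->
  exists c, cycle g c /\ perm_eq c (v :: s).
Proof.
move=> sg; rewrite gpathE /= => /andP[ps _] lti h1 h2.
rewrite -(last_take v (ltnW lti)) in h2.
have e1 : nth v s i = head v (drop i s) by rewrite -nth0 nth_drop addn0.
rewrite e1 in h1.
have e2 : last v s = last (last v (take i s)) (drop i s) by rewrite -last_cat cat_take_drop.
rewrite e2 in h2.
have hb : drop i s != [::] by rewrite -size_eq0 size_drop subn_eq0 -ltnNge.
move: ps; rewrite -{1}[s](cat_take_drop i) cat_path => /andP[pa pb].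
exists (v :: take i s ++ rev (drop i s)); split; last first.
  rewrite perm_cons; apply/permP => p; by rewrite count_cat count_rev -count_cat cat_take_drop.
case E: (drop i s) hb h1 h2 pb => [|w b'] // _ vw hlast pb.
rewrite /= rcons_path cat_path pa /= last_cat.
have -> : last (last v (take i s)) (rev (w :: b')) = w by rewrite -head_rev revK.
rewrite (sg w v) vw andbT path_pthE pth_rev // (path_pth pb) /=.
by rewrite head_rev hlast orbT.
Qed.

End Aux.

Section Sets.
Variable T : finType.
Implicit Types (g : rel T) (s : seq T) (E A S H : {set T}).

Definition restrict g A : rel T := fun x y => [&& g x y, x \in A & y \in A].
Definition nbr g v : {set T} := [set w | g v w].
Definition cliques g t := [set S : {set T} | (#|S| == t) && is_clique g S].

Lemma NKE g t : NK g t = #|cliques g t|. Proof. by []. Qed.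

Lemma edgesP g E : reflect (exists x y, g x y /\ E = [set x; y]) (E \in edges g).
Proof.
apply: (iffP idP) => [/imset2P[x y _ + ->]|[x [y [xy ->]]]].
  by rewrite inE => xy; exists x, y.
by apply: (imset2_f (fun x y => [set x; y])) => //; rewrite inE.
Qed.

Lemma edge2 g E : irreflexive g -> E \in edges g -> #|E| = 2.
Proof.
move=> ir /edgesP[x [y [xy ->]]]; rewrite cards2; case: eqP xy => // ->.
by rewrite ir.
Qed.

Lemma cliqueP g S : reflect (forall x y, x \in S -> y \in S -> x != y -> g x y) (is_clique g S).
Proof.
apply: (iffP forall_inP) => [h x y xS yS xy|h x xS].
  by move: (h x xS) => /forall_inP/(_ y yS)/implyP; apply.
by apply/forall_inP => y yS; apply/implyP; apply: h.
Qed.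

Lemma restrict_sub g A x y : restrict g A x y -> g x y.
Proof. by case/and3P. Qed.

Lemma restrict_sym g A : symmetric g -> symmetric (restrict g A).
Proof. by move=> sg x y; rewrite /restrict sg; case: (x \in A); case: (y \in A); rewrite ?andbF. Qed.

Lemma restrict_irr g A : irreflexive g -> irreflexive (restrict g A).
Proof. by move=> ir x; rewrite /restrict ir. Qed.

Lemma clique_sub g A S : S \subset A -> is_clique (restrict g A) S = is_clique g S.
Proof.
move=> /subsetP sA; apply/cliqueP/cliqueP => h x y xS yS xy.
  exact: restrict_sub (h x y xS yS xy).
by rewrite /restrict h // !sA.
Qed.

Lemma other_elt S x : 2 <= #|S| -> exists2 y, y \in S & y != x.
Proof.
move=> c2; have : 0 < #|S :\ x|.
  by move: c2; rewrite (cardsD1 x S); case: (x \in S) => /=; lia.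
by case/card_gt0P => y; rewrite !inE => /andP[yx yS]; exists y.
Qed.

Lemma clique_restrict_sub g A S : 2 <= #|S| -> is_clique (restrict g A) S -> S \subset A.
Proof.
move=> c2 /cliqueP h; apply/subsetP => x xS.
have [y yS yx] := other_elt x c2.
have xy : x != y by rewrite eq_sym.
by case/and3P: (h x y xS yS xy).
Qed.

Definition edges_at g v := [set E in edges g | v \in E].

Lemma edges_restrict g A : edges (restrict g A) = [set E in edges g | E \subset A].
Proof.
apply/setP => E; rewrite inE; apply/edgesP/andP.
  case=> x [y [/and3P[xy xA yA] ->]]; split; first by apply/edgesP; exists x, y.
  by apply/subsetP => z; rewrite !inE => /orP[]/eqP->.
case=> /edgesP[x [y [xy ->]]] /subsetP s; exists x, y; split => //.
by rewrite /restrict xy !s // !inE eqxx ?orbT.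
Qed.

Lemma clique_restrict_g g A S : is_clique (restrict g A) S -> is_clique g S.
Proof. move/cliqueP=> h; apply/cliqueP => x y xS yS xy; exact: restrict_sub (h x y xS yS xy). Qed.

Lemma NK_del g t v : 2 <= t ->
  NK g t = NK (restrict g [set~ v]) t + #|[set S in cliques g t | v \in S]|.
Proof.
move=> t2; rewrite !NKE -(cardsID [set S : {set T} | v \in S] (cliques g t)) addnC.
congr (_ + _); apply: eq_card => S; rewrite !inE; last by rewrite andbC.
case vS: (v \in S); rewrite /= ?andbF ?andbT.
  apply/esym/negbTE/andP => -[/eqP St cl].
  have c2 : 2 <= #|S| by rewrite St.
  have := clique_restrict_sub c2 cl => /subsetP/(_ v vS).
  by rewrite !inE eqxx.
rewrite clique_sub //; apply/subsetP => x xS; rewrite !inE; apply/eqP => e.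
by rewrite -e xS in vS.
Qed.

Lemma cv_le g t v : 1 <= t ->
  #|[set S in cliques g t | v \in S]| <= 'C(#|nbr g v|, t.-1).
Proof.
move=> t1; rewrite -cards_draws.
rewrite -(@card_in_imset _ _ (fun S => S :\ v)); last first.
  move=> S1 S2; rewrite !inE => /andP[_ v1] /andP[_ v2] e.
  by rewrite -(setD1K v1) -(setD1K v2) e.
apply: subset_leq_card; apply/subsetP => B /imsetP[S]; rewrite !inE.
move=> /andP[/andP[/eqP St /cliqueP cl] vS] ->; apply/andP; split.
  apply/subsetP => x; rewrite !inE => /andP[xv xS]; apply: cl => //.
  by rewrite eq_sym.
by move: St; rewrite (cardsD1 v S) vS => <-.
Qed.

Lemma clique_closed g H S : (forall x y, g x y -> (x \in H) = (y \in H)) ->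
  is_clique g S -> ~~ (S \subset H) -> S \subset ~: H.
Proof.
move=> cl /cliqueP c /subsetPn[x xS xH]; apply/subsetP => y yS.
rewrite inE; case: (eqVneq x y) => [<- //|xy].
by rewrite -(cl _ _ (c x y xS yS xy)).
Qed.

Lemma NK_split g t H : 2 <= t -> (forall x y, g x y -> (x \in H) = (y \in H)) ->
  NK g t = NK (restrict g H) t + NK (restrict g (~: H)) t.
Proof.
move=> t2 cl; rewrite !NKE -(cardsID [set S : {set T} | S \subset H] (cliques g t)).
congr (_ + _); apply: eq_card => S; rewrite !inE.
  case sH: (S \subset H); rewrite /= ?andbT ?andbF; first by rewrite clique_sub.
  apply/esym/negbTE/andP => -[/eqP St c].
  have c2 : 2 <= #|S| by rewrite St.
  by have := clique_restrict_sub c2 c; rewrite sH.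
case sH: (S \subset H) => /=.
  apply/esym/negbTE/andP => -[/eqP St c].
  have c2 : 2 <= #|S| by rewrite St.
  have := clique_restrict_sub c2 c => sC.
  have : S \subset H :&: ~: H by rewrite subsetI sH sC.
  rewrite setICr subset0 => /eqP S0; by move: St; rewrite S0 cards0; lia.
case St: (#|S| == t) => //=; apply/idP/idP => [c|/clique_restrict_g //].
by rewrite clique_sub // (clique_closed cl c) ?sH.
Qed.

Lemma edges_at_card g v : symmetric g -> irreflexive g ->
  #|edges_at g v| = #|nbr g v|.
Proof.
move=> sg ir.
have -> : edges_at g v = [set [set v; w] | w in nbr g v].
  apply/setP => E; rewrite inE; apply/andP/imsetP.
    case=> /edgesP[x [y [xy ->]]]; rewrite !inE => /orP[]/eqP->.
      by exists y; rewrite ?inE.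
    by exists x; rewrite ?inE 1?sg // setUC.
  case=> w; rewrite inE => vw ->; split; last by rewrite !inE eqxx.
  by apply/edgesP; exists v, w.
apply: card_in_imset => w1 w2; rewrite !inE => v1 v2 e.
have : w1 \in [set v; w2] by rewrite -e !inE eqxx orbT.
rewrite !inE => /orP[/eqP e1|/eqP //]; by rewrite e1 ir in v1.
Qed.

End Sets.

Section DC.
Variable T : finType.
Implicit Types (g : rel T) (E A B S H : {set T}).

Lemma card_sum (U : finType) (A : {set U}) (P : pred U) :
  #|[set x in A | P x]| = \sum_(x in A) P x.
Proof.
rewrite -sum1_card (eq_bigl (fun x => (x \in A) && P x)); last by move=> x; rewrite inE.
by rewrite big_mkcondr; apply: eq_bigr => x _; case: (P x).
Qed.

Lemma sum_eq_le (U : finType) (A : pred U) (f h : U -> nat) :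
  (forall i, A i -> f i <= h i) -> \sum_(i | A i) f i = \sum_(i | A i) h i ->
  forall i, A i -> f i = h i.
Proof.
move=> le e i Ai; apply/eqP; rewrite eqn_leq le //=; rewrite leqNgt; apply/negP => lt.
move: e; rewrite (bigD1 i Ai) [X in _ = X](bigD1 i Ai) /= => e.
have : f i + \sum_(j | A j && (j != i)) f j < h i + \sum_(j | A j && (j != i)) h j.
  by rewrite -addSn leq_add // leq_sum // => j /andP[Aj _]; apply: le.
by rewrite e ltnn.
Qed.

Lemma extend_set B A k : B \subset A -> #|B| <= k -> k <= #|A| ->
  exists S, [/\ B \subset S, S \subset A & #|S| = k].
Proof.
move=> BA; move: k; suff h : forall j, #|B| + j <= #|A| ->
    exists S, [/\ B \subset S, S \subset A & #|S| = #|B| + j].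
  by move=> k bk kA; have := h (k - #|B|); rewrite subnKC //; apply.
elim=> [|j IH] hj; first by exists B; rewrite addn0.
have hj' : #|B| + j <= #|A| by lia.
have [S [BS SA cS]] := IH hj'.
have : ~~ (A \subset S) by apply/negP => /subset_leq_card; lia.
case/subsetPn => x xA xS; exists (x |: S); split.
- by apply: subset_trans BS (subsetUr _ _).
- by rewrite subUset sub1set xA.
- by rewrite cardsU1 xS cS addnS.
Qed.

Variables (g : rel T) (H : {set T}) (t : nat).
Hypotheses (sg : symmetric g) (ir : irreflexive g) (inH : forall x y, g x y -> x \in H) (t2 : 2 <= t).

Definition cnt E := #|[set S in cliques g t | E \subset S]|.
Definition sup E := [set S : {set T} | [&& E \subset S, S \subset H & #|S| == t]].

Lemma clique_in_H S : #|S| = t -> is_clique g S -> S \subset H.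
Proof.
move=> St /cliqueP c; apply/subsetP => x xS.
have c2 : 2 <= #|S| by rewrite St.
have [y yS yx] := other_elt x c2.
by apply: (inH (y := y)); apply: c => //; rewrite eq_sym.
Qed.

Lemma cnt_sub E : [set S in cliques g t | E \subset S] \subset sup E.
Proof.
apply/subsetP => S; rewrite !inE => /andP[/andP[/eqP St c] ES].
by rewrite ES St eqxx clique_in_H.
Qed.

Lemma edge_H E : E \in edges g -> E \subset H.
Proof.
case/edgesP=> x [y [xy ->]]; apply/subsetP => z; rewrite !inE => /orP[]/eqP->.
  exact: inH xy.
by apply: (inH (y := x)); rewrite sg.
Qed.

Lemma sup_card E : E \in edges g -> #|sup E| = 'C(#|H| - 2, t - 2).
Proof.
move=> Ee; have E2 := edge2 ir Ee; have EH := edge_H Ee.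
have -> : #|H| - 2 = #|H :\: E| by rewrite cardsD (setIidPr EH) E2.
rewrite -cards_draws.
have -> : sup E = [set B :|: E | B in [set B : {set T} | (B \subset H :\: E) && (#|B| == t - 2)]].
  apply/setP => S; rewrite inE; apply/idP/imsetP.
    case/and3P => ES SH /eqP St; exists (S :\: E).
      rewrite inE cardsD (setIidPr ES) St E2 eqxx andbT.
      by apply/subsetP => x; rewrite !inE => /andP[-> /(subsetP SH)].
    apply/setP => x; rewrite !inE; case: (boolP (x \in E)) => xE /=; last by case: (x \in S).
    by rewrite (subsetP ES).
  case=> B; rewrite inE => /andP[BHE /eqP Bt] ->.
  have BE : B :&: E = set0.
    apply/setP => x; rewrite !inE; apply/negP => /andP[xB xE].
    by move: (subsetP BHE x xB); rewrite !inE xE.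
  rewrite subsetUr subUset EH andbT cardsU BE cards0 Bt E2 subn0 subnK //.
  by rewrite eqxx andbT (subset_trans BHE) // subsetDl.
apply: card_in_imset => B1 B2; rewrite !inE => /andP[h1 _] /andP[h2 _] e.
apply/setP => x; case: (boolP (x \in E)) => xE.
  have n1 : x \notin B1 by apply/negP => /(subsetP h1); rewrite !inE xE.
  have n2 : x \notin B2 by apply/negP => /(subsetP h2); rewrite !inE xE.
  by rewrite (negbTE n1) (negbTE n2).
by have := congr1 (fun X : {set T} => x \in X) e; rewrite /= !inE (negbTE xE) !orbF.
Qed.

Lemma double_count : 'C(t, 2) * NK g t = \sum_(E in edges g) cnt E.
Proof.
rewrite NKE mulnC -sum_nat_const.
transitivity (\sum_(S in cliques g t) \sum_(E in edges g) (E \subset S : nat)).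
  apply: eq_bigr => S; rewrite inE => /andP[/eqP St c].
  rewrite -card_sum -St -cards_draws; apply: eq_card => E; rewrite !inE.
  apply/idP/idP => /andP[h1 h2]; last by rewrite h2 (edge2 ir h1).
  rewrite h1 andbT; case/cards2P: h2 => x [y [xy eE]].
  apply/edgesP; exists x, y; split => //.
  by move/cliqueP: c; apply => //; apply: (subsetP h1); rewrite eE !inE eqxx ?orbT.
rewrite exchange_big; apply: eq_bigr => E _; rewrite /cnt card_sum.
by apply: eq_bigr.
Qed.

Lemma dcount : 'C(t, 2) * NK g t <= #|edges g| * 'C(#|H| - 2, t - 2).
Proof.
rewrite double_count -sum_nat_const; apply: leq_sum => E Ee.
by rewrite -(sup_card Ee) subset_leq_card // cnt_sub.
Qed.

Lemma dcount_eq : 3 <= t -> t <= #|H| -> (forall x, x \in H -> exists y, g x y) ->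
  ('C(t, 2) * NK g t = #|edges g| * 'C(#|H| - 2, t - 2)) <-> is_clique g H.
Proof.
move=> t3 tH nb; rewrite double_count -sum_nat_const; split => [e|cl].
  have eq1 : forall E, E \in edges g -> cnt E = #|sup E|.
    move=> E Ee; rewrite (sup_card Ee); move: E Ee.
    apply: (sum_eq_le (A := fun E => E \in edges g)) => // E Ee.
    by rewrite -(sup_card Ee) subset_leq_card // cnt_sub.
  apply/cliqueP => x y xH yH xy; apply/negPn/negP => nxy.
  have [z xz] := nb x xH.
  have zy : z != y by apply/eqP => e'; rewrite -e' xz in nxy.
  have Ee : [set x; z] \in edges g by apply/edgesP; exists x, z.
  have [S0 [BS SH St]] : exists S, [/\ x |: [set z; y] \subset S, S \subset H & #|S| = t].
    apply: extend_set => //.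
      by rewrite subUset sub1set xH subUset !sub1set yH (inH (y := x)) // sg.
    by rewrite cardsU1 cards2; case: (x \in _); case: (z != y) => /=; lia.
  have : S0 \in sup [set x; z].
    rewrite /sup inE SH St eqxx andbT andbT; apply: subset_trans BS.
    by apply/subsetP => w; rewrite !inE => /orP[]->; rewrite ?orbT.
  have e0 : [set S in cliques g t | [set x; z] \subset S] = sup [set x; z].
    apply/eqP; rewrite eqEcard cnt_sub /=; have := eq1 _ Ee; rewrite /cnt => ->.
    by rewrite leqnn.
  rewrite -e0.
  rewrite !inE => /andP[/andP[_ /cliqueP c] _].
  have : g x y by apply: c => //; apply: (subsetP BS); rewrite !inE eqxx ?orbT.
  by rewrite (negbTE nxy).
apply: eq_bigr => E Ee; rewrite -(sup_card Ee); apply: eq_card => S; rewrite !inE.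
apply/andP/and3P => [[/andP[/eqP St c] ES]|[ES SH /eqP St]].
  by rewrite ES St clique_in_H.
rewrite St eqxx ES /=; split => //; apply/cliqueP => a b aS bS ab.
by move/cliqueP: cl; apply => //; apply: (subsetP SH).
Qed.

End DC.

Lemma pow2_ffact s a : 2 ^ s * a ^_ s <= (2 * a) ^_ s.
Proof.
elim: s => [|s IH]; first by rewrite !ffactn0.
rewrite !ffactnSr expnS.
have -> : 2 * 2 ^ s * (a ^_ s * (a - s)) = (2 ^ s * a ^_ s) * (2 * (a - s)) by nia.
by apply: leq_mul => //; lia.
Qed.

Lemma pow2_bin s a : 2 ^ s * 'C(a, s) <= 'C(2 * a, s).
Proof.
rewrite -(leq_pmul2r (fact_gt0 s)) -mulnA !bin_ffact; exact: pow2_ffact.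
Qed.

Lemma pow2_lin s : s.+2 <= 2 ^ s.+1.
Proof. by elim: s => // s IH; rewrite expnS; lia. Qed.

Lemma pow2_lin_strict s : s.+3 < 2 ^ s.+2.
Proof. by elim: s => // s IH; rewrite expnS; lia. Qed.

Lemma binom_key s a b : 2 * a <= b -> s.+2 * 'C(a, s) <= 2 * 'C(b, s).
Proof.
move=> ab; apply: leq_trans (_ : 2 * (2 ^ s * 'C(a, s)) <= _).
  by rewrite mulnA -expnS leq_mul2r pow2_lin orbT.
by rewrite leq_mul2l /= (leq_trans (pow2_bin s a)) // leq_bin2l.
Qed.

Lemma binom_key_strict s a b : 2 * a <= b -> 1 <= s -> s <= b ->
  s.+2 * 'C(a, s) < 2 * 'C(b, s).
Proof.
move=> ab s1 sb; case: (posnP 'C(a, s)) => [->|ca].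
  by rewrite muln0 muln_gt0 bin_gt0 sb.
apply: leq_trans (_ : 2 * (2 ^ s * 'C(a, s)) <= _); last first.
  by rewrite leq_mul2l /= (leq_trans (pow2_bin s a)) // leq_bin2l.
rewrite mulnA -expnS ltn_mul2r ca /=.
case: s s1 {ab sb ca} => // s _; exact: pow2_lin_strict.
Qed.

Lemma bin2S s : 2 * 'C(s.+2, 2) = s.+2 * s.+1.
Proof. by rewrite -mul_bin_diag /= bin1 mulnC. Qed.

Lemma caseA_bin s d m : 1 <= d -> 2 * d <= m.+1 ->
  'C(s.+2, 2) * 'C(d, s.+1) <= d * 'C(m.-1, s).
Proof.
move=> d1 dm; rewrite -(leq_pmul2l (isT : 0 < 2)) mulnA bin2S.
rewrite -mulnA -mul_bin_diag mulnCA [2 * (d * _)]mulnCA leq_mul2l.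
by rewrite binom_key ?orbT //; lia.
Qed.

Lemma caseA_bin_strict s d m : 1 <= d -> 2 * d <= m.+1 -> 1 <= s -> s <= m.-1 ->
  'C(s.+2, 2) * 'C(d, s.+1) < d * 'C(m.-1, s).
Proof.
move=> d1 dm s1 sm; rewrite -(ltn_pmul2l (isT : 0 < 2)) mulnA bin2S.
rewrite -mulnA -mul_bin_diag mulnCA [2 * (d * _)]mulnCA ltn_pmul2l //.
by rewrite binom_key_strict //; lia.
Qed.

Section Gen.
Variable T : finType.
Implicit Types (g : rel T) (s p q : seq T) (E A S H C : {set T}).

Lemma path_restrict g A x s : all (fun y => y \in A) (x :: s) ->
  path (restrict g A) x s = path g x s.
Proof.
elim: s x => // y s IH x /= /and3P[xA yA al].
by rewrite /restrict xA yA !andbT IH //= yA.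
Qed.

Lemma gpath_restrict g A s : all (fun y => y \in A) s ->
  is_gpath (restrict g A) s = is_gpath g s.
Proof. by case: s => // x s al; rewrite !gpath_cons path_restrict. Qed.

Lemma gpath_sub g g' s : (forall x y, g' x y -> g x y) -> is_gpath g' s -> is_gpath g s.
Proof. by move=> sub; case: s => // x s /andP[p u]; rewrite gpath_cons u (sub_path sub p). Qed.

Lemma has_path_in_restrict g A C k : C \subset A ->
  has_path_in (restrict g A) C k = has_path_in g C k.
Proof.
move=> /subsetP CA; apply/existsP/existsP => -[u /andP[gu al]]; exists u; rewrite al andbT.
  exact: gpath_sub (@restrict_sub _ g A) gu.
rewrite gpath_restrict //; apply/allP => x /(allP al); exact: CA.
Qed.

Lemma path_closure g H x p : (forall a b, g a b -> (a \in H) = (b \in H)) ->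
  path g x p -> all (fun y => (y \in H) == (x \in H)) p.
Proof.
move=> cl; elim: p x => // y p IH x /= /andP[xy pp].
have e := cl _ _ xy; rewrite -e eqxx /=; have := IH y pp; by rewrite -e.
Qed.

Lemma gpath_take g s k : is_gpath g s -> 0 < k -> is_gpath g (take k s).
Proof.
case: s => // x s /andP[p u]; case: k => // k _.
have -> : take k.+1 (x :: s) = x :: take k s by [].
by rewrite gpath_cons take_path //; exact: (take_uniq k.+1 u).
Qed.

Lemma clique_path g S x s : is_clique g S -> uniq (x :: s) -> all (fun y => y \in S) (x :: s) ->
  path g x s.
Proof.
move=> /cliqueP c; elim: s x => // y s IH x /= /andP[/norP[xy _] /andP[ys u]] /and3P[xS yS al].
by rewrite c // IH //= ?ys ?u ?yS.
Qed.

Lemma tuple_gpath g s k : is_gpath g s -> size s = k.+1 ->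
  [exists u : k.+1.-tuple T, is_gpath g u && all (fun y => y \in s) u].
Proof.
move=> gs ss; have Hs : size s == k.+1 by rewrite ss.
apply/existsP; exists (Tuple Hs); rewrite /= gs /=; by apply/allP.
Qed.

Lemma longest g (x0 : T) : exists P, is_gpath g P /\ forall q, is_gpath g q -> size q <= size P.
Proof.
pose Pk k := [exists u : k.+1.-tuple T, is_gpath g u].
have exP : exists k, Pk k.
  by exists 0; apply/existsP; exists [tuple x0].
have ubP : forall k, Pk k -> k <= #|T|.
  move=> k /existsP[u gu]; have /andP[_] := gpath_size gu; rewrite size_tuple; lia.
case: (ex_maxnP exP ubP) => m /existsP[u gu] mx.
exists u; split => // q gq; rewrite size_tuple.
have /andP[q0 _] := gpath_size gq.
suff : (size q).-1 <= m by lia.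
apply: mx.
apply/existsP; have Hs : size q == (size q).-1.+1 by rewrite prednK.
by exists (Tuple Hs).
Qed.

End Gen.

Section Main.
Variable T : finType.
Variable t : nat.
Hypothesis t2 : 2 <= t.
Implicit Types (g : rel T) (s p q : seq T) (E A S H C : {set T}).

Definition Wsum g := \sum_(E in edges g) 'C(plong g E - 1, t - 2).
Definition Good g := forall x : T, is_clique g (component g x) \/
                      ~~ has_path_in g (component g x) (t - 1).

Lemma plong_edge g E : irreflexive g -> E \in edges g -> 1 <= plong g E.
Proof.
move=> ir /edgesP[x [y [xy ->]]].
have xny : x != y by apply/eqP => e; move: xy; rewrite e ir.
have := @plong_ge T g [:: x; y] [set x; y]; rewrite /= xy inE xny /=.
by apply => //; rewrite /path_has_edge /= eqxx.
Qed.

Lemma no_long g : symmetric g -> irreflexive g ->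
  ~~ [exists u : t.-tuple T, is_gpath g u] -> [/\ NK g t = 0, Wsum g = 0 & Good g].
Proof.
move=> sg ir /existsPn nex.
have short : forall s, is_gpath g s -> size s < t.
  move=> s gs; rewrite ltnNge; apply/negP => ts.
  have gt : is_gpath g (take t s) by apply: gpath_take; lia.
  have st : size (take t s) = (t.-1).+1 by rewrite size_takel //; lia.
  have /existsP[u /andP[gu _]] := tuple_gpath gt st.
  have Ht : t.-1.+1 = t by lia.
  by move: (nex (tcast Ht u)); rewrite val_tcast gu.
split.
- rewrite NKE; apply: eq_card0 => S; rewrite inE; apply/negP => /andP[/eqP St c].
  case eS: (enum S) (enum_uniq S) => [|x r] u.
    by move: St; rewrite cardE eS /=; lia.
  have : is_gpath g (x :: r).
    rewrite gpath_cons u andbT; apply: clique_path c u _.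
    by apply/allP => z; rewrite -eS mem_enum.
  by move/short; rewrite -eS -cardE St ltnn.
- rewrite /Wsum big1 // => E Ee; apply: bin_small.
  have p1 := plong_edge ir Ee.
  suff : plong g E <= t - 2 by lia.
  apply: plong_le => s gs _; have := short s gs; lia.
- move=> x; right; apply/negP => /existsP[u /andP[gu _]].
  by have := short u gu; rewrite size_tuple; lia.
Qed.

Lemma edge_at g E v : symmetric g -> E \in edges g -> v \in E ->
  exists w, g v w /\ E = [set v; w].
Proof.
move=> sg /edgesP[x [y [xy ->]]]; rewrite !inE => /orP[]/eqP->.
  by exists y.
by exists x; rewrite sg setUC.
Qed.

Lemma sub_setC1 E (v : T) : (E \subset [set~ v]) = (v \notin E).
Proof.
apply/subsetP/idP => [h|h x xE]; first by apply/negP => /h; rewrite !inE eqxx.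
by rewrite !inE; apply/eqP => e; move: xE; rewrite e (negbTE h).
Qed.

Lemma caseA g v s : symmetric g -> irreflexive g -> is_gpath g (v :: s) ->
  (forall q, is_gpath g q -> size q <= (size s).+1) -> t.-1 <= size s ->
  2 * #|nbr g v| <= (size s).+1 ->
  'C(t, 2) * NK (restrict g [set~ v]) t <= Wsum (restrict g [set~ v]) ->
  'C(t, 2) * NK g t <= Wsum g /\ (3 <= t -> 'C(t, 2) * NK g t < Wsum g /\ ~ Good g).
Proof.
move=> sg ir gP lg tm dm IH.
have nbs : forall w, g v w -> w \in s.
  move=> w vw; apply/negPn/negP => ws.
  have wv : w != v by apply/eqP => e; move: vw; rewrite e ir.
  have : is_gpath g (w :: v :: s).
    move: gP; rewrite !gpath_cons => /andP[p u].
    by rewrite cons_uniq u andbT /= (sg w v) vw p inE negb_or wv ws.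
  by move/lg => /=; lia.
have pe : forall w, g v w -> size s <= plong g [set v; w].
  move=> w vw; case/splitPr: (nbs w vw) gP => s1 s2 gP.
  have [gq hq] := rotate_end sg gP vw; have := plong_ge gq hq.
  rewrite !size_cat size_rev /=; lia.
have d1 : 0 < #|nbr g v|.
  case: s gP tm {lg dm nbs pe} => [|y s'] gP tm; first by move: tm => /=; lia.
  by apply/card_gt0P; exists y; rewrite inE; move: gP; rewrite gpath_cons /= => /andP[/andP[]].
have WS : Wsum g = \sum_(E in edges g | v \in E) 'C(plong g E - 1, t - 2) +
                  \sum_(E in edges g | v \notin E) 'C(plong g E - 1, t - 2).
  by rewrite /Wsum (bigID (fun E => v \in E)).
have W1 : #|nbr g v| * 'C((size s).-1, t - 2) <= \sum_(E in edges g | v \in E) 'C(plong g E - 1, t - 2).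
  rewrite -(edges_at_card v sg ir) -sum_nat_const.
  rewrite (eq_bigl (fun E => (E \in edges g) && (v \in E))); last by move=> E; rewrite inE.
  apply: leq_sum => E /andP[Ee vE]; have [w [vw eE]] := edge_at sg Ee vE.
  by apply: leq_bin2l; rewrite eE; have := pe w vw; lia.
have W2 : Wsum (restrict g [set~ v]) <= \sum_(E in edges g | v \notin E) 'C(plong g E - 1, t - 2).
  rewrite /Wsum edges_restrict.
  rewrite (eq_bigl (fun E => (E \in edges g) && (v \notin E))); last first.
    by move=> E; rewrite inE sub_setC1.
  apply: leq_sum => E _; apply: leq_bin2l; apply: leq_sub2r; apply: plong_mono.
  exact: restrict_sub.
have NKe := @NK_del T g t v t2.
have cvle := @cv_le T g t v (ltnW t2).
have et1 : (t - 2).+2 = t by lia.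
have et2 : (t - 2).+1 = t.-1 by lia.
have key : 'C(t, 2) * 'C(#|nbr g v|, t.-1) <= #|nbr g v| * 'C((size s).-1, t - 2).
  by have := caseA_bin (t - 2) d1 dm; rewrite et1 et2.
split.
  rewrite NKe mulnDr WS [X in _ <= X]addnC; apply: leq_add; first exact: leq_trans IH W2.
  apply: (leq_trans _ (leq_trans key W1)); by rewrite leq_mul2l cvle orbT.
move=> t3; split.
  have keys : 'C(t, 2) * 'C(#|nbr g v|, t.-1) < #|nbr g v| * 'C((size s).-1, t - 2).
    have := caseA_bin_strict (d := #|nbr g v|) (m := size s) (s := t - 2) d1 dm.
    rewrite et1 et2; apply; lia.
  rewrite NKe mulnDr WS [X in _ < X]addnC -addnS; apply: leq_add; first exact: leq_trans IH W2.
  apply: (leq_trans _ (leq_trans keys W1)); by rewrite ltnS leq_mul2l cvle orbT.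
move=> G; have pc := path_connect (e := g) (x := v) (p := s).
move: (gP); rewrite gpath_cons => /andP[pp uu].
case: (G v) => [cl|/negP np].
  have sub : {subset s <= nbr g v}.
    move=> x xs; rewrite inE; move/cliqueP: cl; apply.
    - by rewrite inE connect0.
    - by rewrite inE; apply: pc => //; rewrite inE xs orbT.
    - by apply/eqP => e; move: uu; rewrite /= e xs.
  have := subset_leq_card (introT subsetP sub).
  move: uu; rewrite cons_uniq => /andP[_ /card_uniqP ->]; lia.
apply: np; have gt : is_gpath g (take t (v :: s)) by apply: gpath_take; lia.
have st : size (take t (v :: s)) = (t - 1).+1 by rewrite size_takel /=; lia.
have /existsP[u /andP[gu al]] := tuple_gpath gt st.
apply/existsP; exists u; rewrite gu /=; apply/allP => y /(allP al) /mem_take yv.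
by rewrite inE; apply: pc.
Qed.

Lemma nbr_head g v s : symmetric g -> irreflexive g -> is_gpath g (v :: s) ->
  (forall q, is_gpath g q -> size q <= (size s).+1) -> forall w, g v w -> w \in s.
Proof.
move=> sg ir gP lg w vw; apply/negPn/negP => ws.
have wv : w != v by apply/eqP => e; move: vw; rewrite e ir.
have : is_gpath g (w :: v :: s).
  move: gP; rewrite !gpath_cons => /andP[p u].
  by rewrite cons_uniq u andbT /= (sg w v) vw p inE negb_or wv ws.
by move/lg => /=; lia.
Qed.

Lemma nbr_last g v s : symmetric g -> irreflexive g -> is_gpath g (v :: s) ->
  (forall q, is_gpath g q -> size q <= (size s).+1) -> forall w, g (last v s) w -> w \in v :: s.
Proof.
move=> sg ir gP lg w uw; apply/negPn/negP => ws.
have : is_gpath g (rcons (v :: s) w).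
  move: gP; rewrite !gpath_cons => /andP[p u].
  by rewrite -rcons_cons rcons_uniq ws u andbT rcons_path p uw.
by move/lg; rewrite size_rcons /=; lia.
Qed.

Lemma degree_cycle g v s : symmetric g -> irreflexive g -> is_gpath g (v :: s) ->
  (forall q, is_gpath g q -> size q <= (size s).+1) ->
  (size s).+1 < 2 * #|nbr g v| -> (size s).+1 < 2 * #|nbr g (last v s)| ->
  exists c, cycle g c /\ perm_eq c (v :: s).
Proof.
move=> sg ir gP lg dv du.
pose A := [set i : 'I_(size s) | g v (nth v (v :: s) i.+1)].
pose B := [set i : 'I_(size s) | g (nth v (v :: s) i) (last v s)].
have hA : #|nbr g v| <= #|A|.
  apply: leq_trans (leq_imset_card (fun i : 'I_(size s) => nth v (v :: s) i.+1) A).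
  apply: subset_leq_card; apply/subsetP => w; rewrite inE => vw.
  have ws := nbr_head sg ir gP lg vw.
  have ik : index w s < size s by rewrite index_mem.
  apply/imsetP; exists (Ordinal ik); rewrite ?inE /= nth_index //.
have hB : #|nbr g (last v s)| <= #|B|.
  apply: leq_trans (leq_imset_card (fun i : 'I_(size s) => nth v (v :: s) i) B).
  apply: subset_leq_card; apply/subsetP => w; rewrite inE => uw.
  have ws := nbr_last sg ir gP lg uw.
  have ik : index w (v :: s) < size s.
    have : index w (v :: s) < (size s).+1 by rewrite -[(size s).+1]/(size (v :: s)) index_mem.
    rewrite ltnS leq_eqVlt => /orP[/eqP e|//].
    have := nth_index v ws; rewrite e.
    have -> : nth v (v :: s) (size s) = last v s by rewrite -[size s]/((size (v :: s)).-1) nth_last.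
    by move=> ew; move: uw; rewrite -ew ir.
  apply/imsetP; exists (Ordinal ik); rewrite ?inE /= nth_index // sg //.
have : 0 < #|A :&: B|.
  have := cardsU A B; have := max_card (A :|: B); rewrite card_ord; lia.
case/card_gt0P => i; rewrite !inE => /andP[h1 h2].
exact: make_cycle sg gP (ltn_ord i) h1 h2.
Qed.

Lemma last_cl g H x p : (forall a b, g a b -> (a \in H) = (b \in H)) ->
  path g x p -> (last x p \in H) = (x \in H).
Proof.
move=> cl; elim: p x => //= y p IH x /andP[xy pp]; by rewrite IH // (cl _ _ xy).
Qed.

Lemma caseB g c H : symmetric g -> irreflexive g -> cycle g c -> uniq c ->
  (forall q, is_gpath g q -> size q <= size c) -> t <= size c ->
  (forall x, (x \in H) = (x \in c)) ->
  ('C(t, 2) * NK (restrict g (~: H)) t <= Wsum (restrict g (~: H)) /\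
   (3 <= t -> ('C(t, 2) * NK (restrict g (~: H)) t = Wsum (restrict g (~: H)) <->
               Good (restrict g (~: H))))) ->
  'C(t, 2) * NK g t <= Wsum g /\ (3 <= t -> ('C(t, 2) * NK g t = Wsum g <-> Good g)).
Proof.
move=> sg ir cy uc lg tc hH [ih1 ih2].
set g2 := restrict g (~: H); set g1 := restrict g H.
have mc : #|H| = size c.
  rewrite -(card_uniqP uc); apply: eq_card => x; by rewrite hH.
have hc : forall x y, x \in c -> g x y -> y \in c.
  move=> x y xc xy; apply/negPn/negP => yc.
  have [r [cy' u' sz me]] := cycle_rot cy uc xc.
  have : is_gpath g (y :: x :: r) by apply: cycle_out => //; rewrite me.
  by move/lg => /=; rewrite -sz /=; lia.
have cl : forall x y, g x y -> (x \in H) = (y \in H).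
  move=> x y xy; rewrite !hH; apply/idP/idP => [xc|yc]; first exact: hc xy.
  by apply: hc yc _; rewrite sg.
have pm : forall E, E \in edges g -> E \subset H -> plong g E = (size c).-1.
  move=> E /edgesP[x [y [xy ->]]] /subsetP sE.
  have xc : x \in c by rewrite -hH sE // !inE eqxx.
  have yc : y \in c by rewrite -hH sE // !inE eqxx orbT.
  apply/eqP; rewrite eqn_leq; apply/andP; split.
    by apply: plong_le => q gq _; have := lg q gq; lia.
  have [r [cy' u' sz me]] := cycle_rot cy uc xc.
  have yr : y \in r.
    have : y \in x :: r by rewrite me.
    rewrite inE => /orP[/eqP e|//]; by move: xy; rewrite e ir.
  have [q [gq sq hq]] := chord_path sg cy' u' yr xy.
  by have := plong_ge gq hq; rewrite sq sz.
have gc : is_gpath g c.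
  case: c cy uc tc {lg hH mc hc cl pm ih1 ih2} => [|x r] cy' u tc'; first by move: tc' => /=; lia.
  have p : path g x (rcons r x) := cy'.
  by move: p; rewrite rcons_path gpath_cons u => /andP[-> _].
have nbH : forall x, x \in H -> exists y, g1 x y.
  move=> x; rewrite hH => xc; have [r [cy' u' sz me]] := cycle_rot cy uc xc.
  case: r cy' u' sz me => [|y r] cy' u' sz me; first by move: sz tc => /= <-; lia.
  exists y; rewrite /g1 /restrict !hH xc -me !inE eqxx orbT !andbT.
  by move: cy'; rewrite /= => /andP[].
have hpH : has_path_in g H (t - 1).
  have gt : is_gpath g (take t c) by apply: gpath_take; lia.
  have st : size (take t c) = (t - 1).+1 by rewrite size_takel //; lia.
  have /existsP[u /andP[gu al]] := tuple_gpath gt st.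
  apply/existsP; exists u; rewrite gu /=; apply/allP => y /(allP al) /mem_take yc.
  by rewrite hH.
have compH : forall x, x \in H -> component g x = H.
  move=> x xH; apply/setP => y; rewrite inE; apply/idP/idP.
    by case/connectP => p pp ->; rewrite (last_cl cl pp).
  by move=> yH; apply: (connect_cycle cy); rewrite -hH.
have compO : forall x, x \notin H -> component g x = component g2 x /\ component g x \subset ~: H.
  move=> x xH; split.
    apply/setP => y; rewrite !inE; apply/idP/idP; case/connectP => p pp ->; apply/connectP; exists p => //.
      rewrite /g2 path_restrict //= inE xH /=; apply/allP => z zp.
      have := allP (path_closure cl pp) z zp; by rewrite inE (negbTE xH) => /eqP ->.
    by apply: sub_path pp; apply: restrict_sub.
  apply/subsetP => y; rewrite !inE; case/connectP => p pp ->; by rewrite (last_cl cl pp).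
have compO2 : forall x, x \in H -> component g2 x = [set x].
  move=> x xH; apply/setP => y; rewrite !inE; apply/idP/idP => [|/eqP ->]; last exact: connect0.
  case/connectP => -[|z p] /=; first by move=> _ ->.
  by rewrite /g2 /restrict inE xH /= andbF.
have GoodE : Good g <-> is_clique g H /\ Good g2.
  split => [G|[cH G2] x].
    split.
      have : 0 < #|H| by rewrite mc; lia.
      case/card_gt0P => x0 x0H.
      case: (G x0); rewrite compH //; by move/negP.
    move=> x; case: (boolP (x \in H)) => xH.
      left; rewrite compO2 //; apply/cliqueP => a b; rewrite !inE => /eqP -> /eqP ->.
      by rewrite eqxx.
    have [e sub] := compO x xH; rewrite -e.
    case: (G x) => h; [left; rewrite clique_sub // | right; rewrite has_path_in_restrict //].
  case: (boolP (x \in H)) => xH; first by left; rewrite compH.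
  have [e sub] := compO x xH; rewrite e.
  case: (G2 x) => h; rewrite -e in h *.
    by left; rewrite clique_sub in h.
  by right; rewrite has_path_in_restrict in h.
have NKs := @NK_split T g t H t2 cl.
have WS : Wsum g = \sum_(E in edges g | E \subset H) 'C(plong g E - 1, t - 2) +
                  \sum_(E in edges g | ~~ (E \subset H)) 'C(plong g E - 1, t - 2).
  by rewrite /Wsum (bigID (fun E => E \subset H)).
have W1 : \sum_(E in edges g | E \subset H) 'C(plong g E - 1, t - 2) =
          #|edges g1| * 'C(#|H| - 2, t - 2).
  rewrite /g1 edges_restrict -sum_nat_const.
  apply: eq_big => [E|E /andP[Ee sE]]; first by rewrite inE.
  by rewrite pm // mc; congr 'C(_, _); lia.
have W2 : \sum_(E in edges g | ~~ (E \subset H)) 'C(plong g E - 1, t - 2) = Wsum g2.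
  rewrite /Wsum /g2 edges_restrict; apply: eq_big => [E|E /andP[Ee sE]].
    rewrite inE; case: (boolP (E \in edges g)) => //= Ee.
    case/edgesP: Ee => x [y [xy ->]]; rewrite !subUset !sub1set !inE (cl _ _ xy).
    by case: (y \in H).
  congr 'C(_ - 1, _); apply/eqP; rewrite eqn_leq; apply/andP; split; last first.
    by apply: plong_mono; apply: restrict_sub.
  apply: plong_le => q gq hq; have [z zq zE] := phe_mem hq.
  have zH : z \notin H.
    case/edgesP: Ee sE zE => x [y [xy ->]]; rewrite subUset !sub1set (cl _ _ xy) andbb => yH.
    by rewrite !inE => /orP[]/eqP ->; rewrite ?(cl _ _ xy).
  apply: (plong_ge _ hq); rewrite /g2 gpath_restrict //.
  case: q gq zq {hq} => // x0 q gq zq.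
  have pp : path g x0 q by move: gq; rewrite gpath_cons => /andP[].
  have x0H : x0 \notin H.
    move: zq; rewrite inE => /orP[/eqP <- //|zq].
    by have := allP (path_closure cl pp) z zq; rewrite (negbTE zH) => /eqP <-.
  rewrite /= inE x0H /=; apply/allP => y yq.
  by have := allP (path_closure cl pp) y yq; rewrite inE (negbTE x0H) => /eqP ->.
have sg1 : symmetric g1 by apply: restrict_sym.
have ir1 : irreflexive g1 by apply: restrict_irr.
have inH : forall x y, g1 x y -> x \in H by move=> x y /and3P[].
have dc := dcount sg1 ir1 inH t2.
split; first by rewrite NKs mulnDr WS W1 W2; apply: leq_add.
move=> t3; rewrite NKs mulnDr WS W1 W2 GoodE.
have dce := dcount_eq sg1 ir1 inH t2 t3 (ltac:(by rewrite mc)) nbH.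
rewrite /g1 clique_sub // in dce; rewrite -dce -(ih2 t3).
move: dc ih1; set a := _ * NK g1 t; set b := _ * _ .
set c1 := _ * NK g2 t; set d := Wsum g2 => h1 h2; split; first by move=> e; lia.
by case=> -> ->.
Qed.

Definition npairs g := #|[set p : T * T | g p.1 p.2]|.

Lemma pair_drop g A x y : g x y -> x \notin A -> npairs (restrict g A) < npairs g.
Proof.
move=> xy xA; apply: proper_card; apply/properP; split.
  by apply/subsetP => -[a b]; rewrite !inE => /and3P[].
by exists (x, y); rewrite !inE //= /restrict (negbTE xA) andbF.
Qed.

Lemma main_nat g : symmetric g -> irreflexive g ->
  'C(t, 2) * NK g t <= Wsum g /\ (3 <= t -> ('C(t, 2) * NK g t = Wsum g <-> Good g)).
Proof.
have [n] := ubnP (npairs g); elim: n g => // n IH g lt sg ir.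
have IH' : forall A x y, g x y -> x \notin A ->
    'C(t, 2) * NK (restrict g A) t <= Wsum (restrict g A) /\
    (3 <= t -> ('C(t, 2) * NK (restrict g A) t = Wsum (restrict g A) <-> Good (restrict g A))).
  move=> A x y xy xA; apply: IH; last exact: restrict_irr; last exact: restrict_sym.
  exact: leq_trans (pair_drop xy xA) _.
case: (boolP [exists u : t.-tuple T, is_gpath g u]) => [ex|nex]; last first.
  have [-> -> G] := no_long sg ir nex; rewrite muln0; split => // _; split => //.
case/existsP: (ex) => u gu.
have [x0 _] : exists x0 : T, True.
  by case: u gu => -[|a r] //= _ _; exists a.
have [P [gP lP]] := longest g x0.
case: P gP lP => [//|v s] gP lP.
have tm : t.-1 <= size s by have := lP u gu; rewrite size_tuple /=; lia.
have lP' : forall q, is_gpath g q -> size q <= (size s).+1 by exact: lP.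
have fin : forall w r, is_gpath g (w :: r) -> t.-1 <= size r -> 2 * #|nbr g w| <= (size r).+1 ->
    (forall q, is_gpath g q -> size q <= (size r).+1) ->
    'C(t, 2) * NK g t <= Wsum g /\ (3 <= t -> ('C(t, 2) * NK g t = Wsum g <-> Good g)).
  move=> w [|y r] gw tr dw lw; first by move: tr => /=; lia.
  have wy : g w y by move: gw; rewrite gpath_cons /= => /andP[/andP[]].
  have wA : w \notin [set~ w] by rewrite !inE eqxx.
  have [h1 h2] := caseA sg ir gw lw tr dw (IH' _ _ _ wy wA).1.
  split => // t3; have [lt' nG] := h2 t3; split => // e.
  by rewrite e ltnn in lt'.
case: (leqP (2 * #|nbr g v|) (size s).+1) => [dv|dv]; first exact: fin gP tm dv lP'.
have gR : is_gpath g (rev (v :: s)).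
  move: gP; rewrite !gpathE rev_uniq pth_rev // => /andP[/andP[_ ->] ->].
  by rewrite andbT; case: (rev _) (size_rev (v :: s)).
case eR: (rev (v :: s)) gR => [//|u' s''] gR.
have su : size s'' = size s by have := size_rev (v :: s); rewrite eR /=; case.
have eu : u' = last v s by have := head_rev v (v :: s); rewrite eR.
case: (leqP (2 * #|nbr g u'|) (size s'').+1) => [du|du].
  by apply: fin gR _ du _; rewrite su.
rewrite eu su in du.
have [c [cy pc]] := degree_cycle sg ir gP lP' dv du.
have uc : uniq c by rewrite (perm_uniq pc); move: gP; rewrite gpath_cons => /andP[].
have sc : size c = (size s).+1 by rewrite (perm_size pc).
have vc : v \in c by rewrite (perm_mem pc) inE eqxx.
have : 0 < #|nbr g v| by lia.
case/card_gt0P => y; rewrite inE => vy.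
apply: (@caseB g c [set x in c]) => //.
- by move=> q gq; rewrite sc; apply: lP'.
- by rewrite sc; lia.
- by move=> x; rewrite inE.
- by apply: IH' vy _; rewrite !inE vc.
Qed.

End Main.
Import GRing.Theory Num.Theory.

Lemma bin_ident q s : 'C(q.+2, s.+2) * 'C(s.+2, 2) = 'C(q.+2, 2) * 'C(q, s).
Proof.
have e1 := mul_bin_diag q.+2 s.+1.
have e2 := mul_bin_diag q.+1 s.
have e3 := bin2S s.
have e4 := bin2S q.
simpl in e1, e2.
apply/eqP; rewrite -(eqn_pmul2l (isT : 0 < 2)); apply/eqP.
nia.
Qed.

Lemma NK2 (T : finType) (g : rel T) : symmetric g -> irreflexive g -> NK g 2 = #|edges g|.
Proof.
move=> sg ir; rewrite NKE; apply: eq_card => S; rewrite inE.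
apply/andP/idP => [[/cards2P[x [y [xy ->]]] c]|Se].
  apply/edgesP; exists x, y; split => //; move/cliqueP: c; apply => //; by rewrite !inE eqxx ?orbT.
split; first by rewrite (edge2 ir Se).
case/edgesP: Se => x [y [xy ->]]; apply/cliqueP => a b; rewrite !inE.
by case/orP=> /eqP-> /orP[]/eqP->; rewrite ?eqxx // => _; rewrite // sg.
Qed.

Local Open Scope ring_scope.

Theorem theorem3 (T : finType) (g : rel T) (t : nat) :
  simple_graph g -> (2 <= t)%N ->
  let S1 : rat := \sum_(E in edges g)
        ('C(plong g E + 1, t)%:R / 'C(plong g E + 1, 2)%:R) in
  let S2 : rat := ('C(t, 2)%:R)^-1 *
        \sum_(E in edges g) 'C(plong g E - 1, t - 2)%:R in
  [/\ (NK g t)%:R <= S1,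
      S1 = S2,
      t = 2%N -> (NK g t)%:R = S1
    & (3 <= t)%N ->
      ((NK g t)%:R = S1 <->
       (forall x : T, is_clique g (component g x) \/
                      ~~ has_path_in g (component g x) (t - 1)))].
Proof.
move=> [sg ir] t2 S1 S2.
have cpos : (0 < 'C(t, 2))%N by rewrite bin_gt0.
have cnz : ('C(t, 2)%:R : rat) != 0 by rewrite pnatr_eq0 -lt0n.
have e12 : S1 = S2.
  rewrite /S1 /S2 mulr_sumr; apply: eq_bigr => E Ee.
  have p1 := plong_edge ir Ee.
  have b2 : ('C(plong g E + 1, 2)%:R : rat) != 0 by rewrite pnatr_eq0 -lt0n bin_gt0; lia.
  rewrite [RHS]mulrC; apply/eqP; rewrite eqr_div // -!natrM eqr_nat; apply/eqP.
  have ep : (plong g E + 1 = (plong g E - 1).+2)%N by lia.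
  have et : (t = (t - 2).+2)%N by lia.
  by rewrite ep {1 2}et bin_ident mulnC.
have eW : S2 = ('C(t, 2)%:R)^-1 * (Wsum t g)%:R by rewrite /S2 /Wsum natr_sum.
have eN : (NK g t)%:R = ('C(t, 2)%:R)^-1 * ('C(t, 2) * NK g t)%:R :> rat.
  by rewrite natrM mulKf.
have [h1 h2] := main_nat t2 sg ir.
have eqiff : (NK g t)%:R = S1 <-> ('C(t, 2) * NK g t = Wsum t g)%N.
  rewrite e12 eW eN; split => [/(mulfI (invr_neq0 cnz))/eqP|->] //.
  by rewrite eqr_nat => /eqP.
split => //.
- rewrite e12 eW eN ler_pM2l ?invr_gt0 ?ltr0n // ler_nat //.
- move=> t2e; apply/eqiff; subst t; rewrite NK2 // /Wsum /=.
  rewrite mul1n (eq_bigr (fun _ => 1%N)); last by move=> E _; rewrite bin0.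
  by rewrite sum1_card.
- move=> t3; rewrite eqiff; exact: h2 t3.
Qed.
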